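(* Let $(X,\tau,\mathcal{I})$ be a $T_{\mathcal{I}}$-space and let $A\subseteq X$. Then $(A,\tau|_A,\mathcal{I}_A)$ is a $T_{\mathcal{I}_A}$-space, where $\tau|_A$ is the subspace topology and $\mathcal{I}_A=\{I\in\mathcal{I}: I\subseteq A\}=\{I\cap A: I\in\mathcal{I}\}$.
   Context: An ideal on $X$ is a nonempty collection of subsets closed under subsets and finite unions. $(X,\tau,\mathcal{I})$ is a $T_{\mathcal{I}}$-space if for every $I\in\mathcal{I}$ and every $x\in X\setminus I$ there is a set $A_x$ with $x\in A_x$, $A_x\cap I=\emptyset$, and $A_x$ open or closed. *)

(* Defs.v *)
Definition subset {X : Type} (A B : X -> Prop) : Prop := forall x, A x -> B x.

Definition is_topology {X : Type} (tau : (X -> Prop) -> Prop) : Prop :=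
  tau (fun _ => False) /\
  tau (fun _ => True) /\
  (forall F : (X -> Prop) -> Prop, subset F tau ->
     tau (fun x => exists U, F U /\ U x)) /\
  (forall U V, tau U -> tau V -> tau (fun x => U x /\ V x)).

Definition is_ideal {X : Type} (Id : (X -> Prop) -> Prop) : Prop :=
  (exists I, Id I) /\
  (forall I J, Id I -> subset J I -> Id J) /\
  (forall I J, Id I -> Id J -> Id (fun x => I x \/ J x)).

Definition is_closed {X : Type} (tau : (X -> Prop) -> Prop) (C : X -> Prop) : Prop :=
  tau (fun x => ~ C x).

Definition T_ideal_space {X : Type} (tau : (X -> Prop) -> Prop)
    (Id : (X -> Prop) -> Prop) : Prop :=
  is_topology tau /\ is_ideal Id /\
  forall I, Id I -> forall x, ~ I x ->
    exists Ax : X -> Prop, Ax x /\ (forall y, ~ (Ax y /\ I y)) /\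
      (tau Ax \/ is_closed tau Ax).

Definition subspace_top {X : Type} (tau : (X -> Prop) -> Prop) (A : X -> Prop)
  : ({x : X | A x} -> Prop) -> Prop :=
  fun U => exists V, tau V /\ (forall a : {x : X | A x}, U a <-> V (proj1_sig a)).

(* I_A = { I in Id : I ⊆ A }, viewed as subsets of the subtype {x | A x}. *)
Definition restr_ideal {X : Type} (Id : (X -> Prop) -> Prop) (A : X -> Prop)
  : ({x : X | A x} -> Prop) -> Prop :=
  fun J => exists I, Id I /\ subset I A /\
    (forall a : {x : X | A x}, J a <-> I (proj1_sig a)).

(* Main.v *)
Require Import Defs.
From Stdlib Require Import ProofIrrelevance.

Theorem mainTheorem4 (X : Type) (tau : (X -> Prop) -> Prop)
    (Id : (X -> Prop) -> Prop) (A : X -> Prop) :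
  T_ideal_space tau Id ->
  T_ideal_space (subspace_top tau A) (restr_ideal Id A).
Proof.
  intros [[H0 [H1 [HU HI]]] [[[I0 HI0] [HS HJ]] HT]].
  split; [|split].
  - split; [|split; [|split]].
    + exists (fun _ => False). split; [exact H0|]. intros a; tauto.
    + exists (fun _ => True). split; [exact H1|]. intros a; tauto.
    + intros F HF.
      exists (fun x => exists W, (tau W /\ exists U, F U /\ forall a, U a <-> W (proj1_sig a)) /\ W x).
      split.
      * apply HU. intros W [HW _]; exact HW.
      * intros a; split.
        -- intros [U [FU Ua]]. destruct (HF U FU) as [W [tW HW]].
           exists W. split; [split; [exact tW | exists U; split; assumption] |].
           apply HW; exact Ua.
        -- intros [W [[tW [U [FU HW]]] Wa]]. exists U. split; [exact FU|]. apply HW; exact Wa.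
    + intros U V [U' [tU HU']] [V' [tV HV']].
      exists (fun x => U' x /\ V' x). split; [apply HI; assumption|].
      intros a. specialize (HU' a). specialize (HV' a). tauto.
  - split; [|split].
    + exists (fun _ => False). exists (fun _ => False).
      split; [apply (HS I0 _ HI0); intros x []|].
      split; [intros x []|]. intros a; tauto.
    + intros J J' [I [II [IA HJI]]] Hsub.
      exists (fun x => exists h : A x, J' (exist _ x h)).
      split; [|split].
      * apply (HS I _ II). intros x [h Hx]. apply (HJI (exist _ x h)). apply Hsub. exact Hx.
      * intros x [h _]; exact h.
      * intros [x h]; simpl; split.
        -- intros Hx; exists h; exact Hx.
        -- intros [h' Hx]. rewrite (proof_irrelevance _ h h'). exact Hx.
    + intros J J' [I [II [IA HJI]]] [I' [II' [IA' HJI']]].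
      exists (fun x => I x \/ I' x). split; [apply HJ; assumption|].
      split; [intros x [Hx|Hx]; auto|].
      intros a. specialize (HJI a). specialize (HJI' a). tauto.
  - intros J [I [II [IA HJI]]] a Ha.
    assert (nI : ~ I (proj1_sig a)) by (intro K; apply Ha; apply HJI; exact K).
    destruct (HT I II (proj1_sig a) nI) as [Ax [Axa [Hd Ho]]].
    exists (fun b => Ax (proj1_sig b)). split; [exact Axa|]. split.
    + intros b [Hb Jb]. apply (Hd (proj1_sig b)). split; [exact Hb|]. apply HJI; exact Jb.
    + destruct Ho as [Ho|Ho].
      * left. exists Ax. split; [exact Ho|]. intros b; tauto.
      * right. exists (fun x => ~ Ax x). split; [exact Ho|]. intros b; tauto.
Qed.
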